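(* Let $G$ be a graph with $n$ vertices and adjacency matrix $A$. (i) If all eigenvalues of $A$ are equal to $\pm 1$, then $G=\frac{n}{2}K_2$. (ii) If all but one eigenvalue of $A$ (counted with multiplicity) are equal to $\pm 1$, then $G$ is a disjoint union of complete graphs in which all but one of the connected components are equal to $K_2$. (iii) If $A$ has exactly two eigenvalues $r$ and $s$ with $r\geq s$ (counted with multiplicity) different from $\pm 1$, then either $r>1$ and $s<-1$, or $G$ is a disjoint union of complete graphs with exactly two connected components different from $K_2$.
   Context: Graphs are finite, simple and undirected. Eigenvalues of a graph are those of its adjacency matrix. $\frac{n}{2}K_2$ denotes the disjoint union of $n/2$ copies of the complete graph $K_2$ (a perfect matching). *)

(* Defs.v *)
(* Eigenvalues taken over algC (algebraically closed), so the
   characteristic polynomial splits and eigenvalues with multiplicity are the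
   multiset of roots of char_poly. *)
From HB Require Import structures.
From mathcomp Require Import all_boot all_order all_algebra all_field.
Set Implicit Arguments. Unset Strict Implicit. Unset Printing Implicit Defensive.
Import Order.TTheory GRing.Theory Num.Theory.
Local Open Scope ring_scope.

(* A simple graph on vertex set 'I_n is a symmetric irreflexive relation e. *)

Definition adjmx (n : nat) (e : rel 'I_n) : 'M[algC]_n :=
  \matrix_(i, j) (e i j)%:R.

Definition eigenvalues_of (n : nat) (A : 'M[algC]_n) (s : seq algC) : Prop :=
  char_poly A = \prod_(x <- s) ('X - x%:P).

Definition pm1 (x : algC) : bool := (x == 1) || (x == -1).

(* G = (n/2) K_2 : every vertex has exactly one neighbour. *)
Definition perfect_matching_graph (n : nat) (e : rel 'I_n) : Prop :=
  forall x, #|[set y | e x y]| = 1%N.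

Definition comp (n : nat) (e : rel 'I_n) (x : 'I_n) : {set 'I_n} :=
  [set y | connect e x y].

Definition comps (n : nat) (e : rel 'I_n) : {set {set 'I_n}} :=
  [set comp e x | x : 'I_n].

Definition union_of_cliques (n : nat) (e : rel 'I_n) : Prop :=
  forall x y, connect e x y -> x != y -> e x y.

(* In a union of cliques, a component is K_2 iff it has exactly 2 vertices. *)
Definition is_K2_comp (n : nat) (C : {set 'I_n}) : bool := #|C| == 2%N.

(* Main.v *)
Require Import Defs.
From HB Require Import structures.
From mathcomp Require Import all_boot all_order all_algebra all_field.
From mathcomp Require Import ring zify.
Set Implicit Arguments. Unset Strict Implicit. Unset Printing Implicit Defensive.
Import Order.TTheory GRing.Theory Num.Theory.
Local Open Scope ring_scope.
Local Open Scope sesquilinear_scope.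

Lemma char_poly_simil n (P D : 'M[algC]_n) : P \in unitmx ->
  char_poly (invmx P *m D *m P) = char_poly D.
Proof.
move=> Pu; rewrite /char_poly /char_poly_mx.
have Pmu : map_mx (@polyC algC) P \in unitmx by rewrite map_unitmx.
rewrite !map_mxM map_invmx.
have eX : ('X%:M : 'M_n) = invmx (map_mx (@polyC algC) P) *m 'X%:M *m map_mx (@polyC algC) P.
  by rewrite -mulmxA -scalar_mxC mulmxA mulVmx // mul1mx.
rewrite {1}eX -mulmxBl -mulmxBr.
by rewrite !det_mulmx mulrAC -det_mulmx mulVmx // det1 mul1r.
Qed.
Lemma char_poly_diag n (d : 'rV[algC]_n) :
  char_poly (diag_mx d) = \prod_(x <- [seq d 0 i | i <- enum 'I_n]) ('X - x%:P).
Proof.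
rewrite char_poly_trig ?diag_mx_is_trig // big_map big_enum /=.
by apply: eq_bigr => i _; rewrite mxE eqxx mulr1n.
Qed.


Lemma count_enum_sum m (b : pred 'I_m) : count b (enum 'I_m) = (\sum_(k < m) (b k : nat))%N.
Proof.
rewrite -sum1_count big_mkcond big_enum /=; apply: eq_bigr => k _; by case: (b k).
Qed.

Lemma rank_diag m (v : 'rV[algC]_m) : \rank (diag_mx v) = (\sum_(k < m) nat_of_bool (v ord0 k != 0%R))%N.
Proof.
elim: m v => [|m IH] v.
  by rewrite big_ord0; apply/eqP; rewrite -leqn0 rank_leq_row.
have E : (diag_mx v : 'M_(1 + m)) = block_mx (diag_mx (lsubmx (v : 'rV_(1 + m))))
   0 0 (diag_mx (rsubmx (v : 'rV_(1 + m)))).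
  by rewrite -diag_mx_row hsubmxK.
have R : \rank (diag_mx v) = (\rank (diag_mx (lsubmx (v : 'rV_(1 + m)))) +
   \rank (diag_mx (rsubmx (v : 'rV_(1 + m)))))%N.
  rewrite E; exact: (@rank_diag_block_mx algC 1 1 m m (diag_mx (lsubmx (v : 'rV_(1 + m)))) (diag_mx (rsubmx (v : 'rV_(1 + m))))). 
rewrite R IH big_ord_recl; congr (_ + _)%N.
  have L : v 0 (lshift m (0 : 'I_1)) = v ord0 ord0.
    by congr (v _ _); exact: val_inj.
  have [z|nz] := eqVneq (v ord0 ord0) 0.
    rewrite /=.
    apply/eqP; rewrite mxrank_eq0; apply/eqP/matrixP => i j.
    by rewrite !ord1 !mxE eqxx mulr1n L z.
  rewrite /= mxrank_unit // unitmxE det_diag big_ord1 mxE L unitfE //.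
apply: eq_bigr => k _; rewrite !mxE; congr (_ != _ : nat); congr (v 0 _); exact: val_inj.
Qed.

Section G.
Variables (n : nat) (e : rel 'I_n).
Hypotheses (esym : symmetric e) (eirr : irreflexive e).

Lemma adj_herm : adjmx e \is hermsymmx.
Proof.
apply/is_hermitianmxP; rewrite expr0 scale1r; apply/matrixP=> i j.
by rewrite !mxE esym conjC_nat.
Qed.

Definition PP := spectralmx (adjmx e).
Definition dd := spectral_diag (adjmx e).

Lemma PP_unitary : PP \is unitarymx.
Proof. exact: spectral_unitarymx. Qed.

Lemma A_decomp : adjmx e = PP^t* *m diag_mx dd *m PP.
Proof.
have /orthomx_spectralP -> := hermitian_normalmx adj_herm.
by rewrite invmx_unitary // spectral_unitarymx.
Qed.

Lemma PPt : PP *m PP^t* = 1%:M.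
Proof. exact/unitarymxP/PP_unitary. Qed.

Lemma PtP : PP^t* *m PP = 1%:M.
Proof. by rewrite -invmx_unitary ?PP_unitary // mulVmx // spectral_unit. Qed.

Lemma dd_real k : dd 0 k \is Num.real.
Proof. by have /mxOverP := hermitian_spectral_diag_real adj_herm; apply. Qed.

Lemma s_perm s : eigenvalues_of (adjmx e) s ->
  perm_eq s [seq dd 0 i | i <- enum 'I_n].
Proof.
rewrite /eigenvalues_of => hs; apply: prod_XsubC_eq; rewrite -hs -char_poly_diag.
have /orthomx_spectralP {1}-> := hermitian_normalmx adj_herm.
by rewrite char_poly_simil // spectral_unit.
Qed.

Lemma trCmul m p q (X : 'M[algC]_(m, p)) (Y : 'M[algC]_(p, q)) : (X *m Y)^t* = Y^t* *m X^t*.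
Proof. by rewrite trmx_mul map_mxM. Qed.

Lemma quad_sum m (y : 'rV[algC]_m) (D : 'rV[algC]_m) :
  (y *m diag_mx D *m y^t*) 0 0 = \sum_k D 0 k * (y 0 k * (y 0 k)^*).
Proof.
rewrite mxE; apply: eq_bigr => k _.
by rewrite mul_mx_diag !mxE mulrCA mulrA.
Qed.

Lemma quadE (x : 'rV_n) : (x *m adjmx e *m x^t*) 0 0 =
  \sum_k dd 0 k * ((x *m PP^t*) 0 k * ((x *m PP^t*) 0 k)^*).
Proof.
rewrite -quad_sum trCmul trmxCK A_decomp !mulmxA.
done.
Qed.

Lemma normE (x : 'rV_n) : (x *m x^t*) 0 0 =
  \sum_k ((x *m PP^t*) 0 k * ((x *m PP^t*) 0 k)^*).
Proof.
have := quad_sum (x *m PP^t*) (const_mx 1).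
rewrite diag_const_mx mulmx1 trCmul trmxCK -mulmxA (mulmxA _ PP) PtP mul1mx => ->.
by apply: eq_bigr => k _; rewrite mxE mul1r.
Qed.

Lemma quad_lb (c : algC) (x : 'rV_n) : (forall k, c <= dd 0 k) ->
  c * (x *m x^t*) 0 0 <= (x *m adjmx e *m x^t*) 0 0.
Proof.
move=> hc; rewrite quadE normE mulr_sumr; apply: ler_sum => k _.
by apply: ler_wpM2r; [exact: mul_conjC_ge0 | exact: hc].
Qed.

Lemma quad_ub (c : algC) (x : 'rV_n) : (forall k, dd 0 k <= c) ->
  (x *m adjmx e *m x^t*) 0 0 <= c * (x *m x^t*) 0 0.
Proof.
move=> hc; rewrite quadE normE mulr_sumr; apply: ler_sum => k _.
by apply: ler_wpM2r; [exact: mul_conjC_ge0 | exact: hc].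
Qed.

Lemma sum3 (g : 'I_n -> algC) a b c : a != b -> b != c -> a != c ->
  (forall i, i != a -> i != b -> i != c -> g i = 0) ->
  \sum_i g i = g a + g b + g c.
Proof.
move=> ab bc ac h; rewrite (bigD1 a) //= (bigD1 b) 1?eq_sym //= (bigD1 c); last first.
  by rewrite eq_sym ac eq_sym bc.
rewrite big1 ?addrA ?addr0 // => i /andP[/andP[ia ib] ic]; exact: h.
Qed.


Definition vec3 (a b c : 'I_n) (sg : algC) : 'rV[algC]_n :=
  \row_i (if i == a then 1 else if i == b then sg else if i == c then 1 else 0).

Lemma quad3 a b c sg : a != b -> b != c -> a != c -> sg^* = sg ->
  e a b -> e b c ->
  ((vec3 a b c sg) *m adjmx e *m (vec3 a b c sg)^t*) 0 0 =
     4%:R * sg + 2%:R * (e a c)%:R /\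
  ((vec3 a b c sg) *m (vec3 a b c sg)^t*) 0 0 = 2%:R + sg * sg.
Proof.
move=> ab bc ac sgr eab ebc.
have ba : b != a by rewrite eq_sym.
have cb : c != b by rewrite eq_sym.
have ca : c != a by rewrite eq_sym.
have vz : forall i, i != a -> i != b -> i != c -> vec3 a b c sg 0 i = 0.
  by move=> i ia ib ic; rewrite mxE (negbTE ia) (negbTE ib) (negbTE ic).
split.
  rewrite mxE (@sum3 _ a b c ab bc ac); last first.
    by move=> i ia ib ic; rewrite !mxE (negbTE ia) (negbTE ib) (negbTE ic) conjC0 mulr0.
  rewrite !mxE !(@sum3 _ a b c ab bc ac); last first.
  - by move=> i ia ib ic; rewrite vz // mul0r.
  - by move=> i ia ib ic; rewrite vz // mul0r.
  - by move=> i ia ib ic; rewrite vz // mul0r.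
  rewrite !mxE !eqxx ?(negbTE ab) ?(negbTE ba) ?(negbTE bc) ?(negbTE cb) ?(negbTE ac) ?(negbTE ca).
  rewrite !eirr eab ebc (esym b a) eab (esym c b) ebc (esym c a) sgr conjC1.
  rewrite !mulr1n !mulr0n; ring.
rewrite mxE (@sum3 _ a b c ab bc ac); last first.
  by move=> i ia ib ic; rewrite !mxE (negbTE ia) (negbTE ib) (negbTE ic) mul0r.
rewrite !mxE !eqxx ?(negbTE ab) ?(negbTE ba) ?(negbTE bc) ?(negbTE cb) ?(negbTE ac) ?(negbTE ca).
rewrite sgr conjC1; ring.
Qed.


Lemma neg_ge0_false (x : algC) k : x = - (k.+1)%:R -> 0 <= x -> False.
Proof. by move=> -> ; rewrite oppr_ge0 lern0. Qed.

Lemma noP3 : ((forall k, -1 <= dd 0 k) \/ (forall k, dd 0 k <= 1)) ->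
  forall a b c, e a b -> e b c -> a != c -> e a c.
Proof.
move=> hd a b c eab ebc ac.
have ab : a != b by apply: contraTneq eab => ->; rewrite eirr.
have bc : b != c by apply: contraTneq ebc => ->; rewrite eirr.
case: hd => hd.
  have [|q nn] := @quad3 a b c (-1) ab bc ac _ eab ebc.
    by rewrite rmorphN1.
  have := quad_lb (vec3 a b c (-1)) hd; rewrite q nn -subr_ge0.
  case: (e a c) => // H; exfalso; apply: (@neg_ge0_false _ 0 _ H).
  rewrite mulr0n; ring.
have [|q nn] := @quad3 a b c 1 ab bc ac _ eab ebc.
  by rewrite conjC1.
have := quad_ub (vec3 a b c 1) hd; rewrite q nn -subr_ge0.
case: (e a c) => H; exfalso.
  by apply: (@neg_ge0_false _ 2 _ H); rewrite mulr1n; ring.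
by apply: (@neg_ge0_false _ 0 _ H); rewrite mulr0n; ring.
Qed.


Lemma clique_of_noP3 : (forall a b c, e a b -> e b c -> a != c -> e a c) ->
  union_of_cliques e.
Proof.
move=> h x y /connectP [p pth ->] {y}.
elim: p x pth => [|z p IH] x /=; first by rewrite eqxx.
case/andP => exz pz xl.
have [zl|zl] := eqVneq (last z p) z; first by rewrite zl.
apply: (h x z) => //; apply: IH => //; by rewrite eq_sym.
Qed.


Lemma PPt_unit : PP^t* \in unitmx.
Proof. by rewrite -invmx_unitary ?PP_unitary // unitmx_inv spectral_unit. Qed.

Lemma rankM : \rank (adjmx e *m adjmx e - 1%:M) =
  (\sum_k nat_of_bool (dd ord0 k ^+ 2 - 1 != 0)%R)%N.
Proof.
have D2 : diag_mx (\row_k (dd 0 k ^+ 2 - 1)) = diag_mx dd *m diag_mx dd - 1%:M.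
  apply/matrixP => i j; rewrite mulmx_diag !mxE.
  by case: eqVneq => _; rewrite ?mulr1n ?mulr0n ?subr0 ?expr2.
have E : adjmx e *m adjmx e - 1%:M =
    PP^t* *m diag_mx (\row_k (dd 0 k ^+ 2 - 1)) *m PP.
  rewrite D2 mulmxBr mulmxBl mulmx1 PtP A_decomp.
  congr (_ - _); rewrite !mulmxA; congr (_ *m _).
  by rewrite -(mulmxA _ PP) PPt mulmx1.
rewrite E mxrankMfree ?row_free_unit ?spectral_unit //.
rewrite (eqmxMfull _ _); last by rewrite row_full_unit PPt_unit.
by rewrite rank_diag; apply: eq_bigr => k _; rewrite mxE.
Qed.


Lemma sum_bool_card m (b : pred 'I_m) : \sum_(v < m) ((b v)%:R : algC) = (#|b|)%:R.
Proof.
rewrite -sum1_card natr_sum [RHS]big_mkcond /=; apply: eq_bigr => v _.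
by rewrite unfold_in; case: (b v).
Qed.

Lemma conn_sym (x y : 'I_n) : connect e x y = connect e y x.
Proof. exact: (@sym_connect_sym _ e esym x y). Qed.

Lemma comp_eq (x y : 'I_n) : connect e x y -> Defs.comp e x = Defs.comp e y.
Proof.
move=> cxy; apply/setP => z; rewrite !inE; apply/idP/idP => h.
  by apply: connect_trans h; rewrite conn_sym.
exact: connect_trans cxy h.
Qed.

Lemma in_comp (x y : 'I_n) : (y \in Defs.comp e x) = connect e x y.
Proof. by rewrite inE. Qed.

Lemma comps_in (C : {set 'I_n}) (v : 'I_n) : C \in comps e -> v \in C -> C = Defs.comp e v.
Proof.
by case/imsetP => x _ -> vx; apply: comp_eq; rewrite -in_comp.
Qed.

Section UC.
Hypothesis uc : union_of_cliques e.

Definition SS := [set C in comps e | ~~ is_K2_comp C].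
Definition CC (i : 'I_#|SS|) : {set 'I_n} := enum_val i.
Definition XX : 'M[algC]_(#|SS|, n) := \matrix_(i, v) ((v \in CC i)%:R).
Definition WW : 'rV[algC]_(#|SS|) := \row_i ((#|CC i|)%:R - 2).

Lemma Ci_comps (i : 'I_#|SS|) : CC i \in comps e.
Proof. by have := enum_valP i; rewrite inE => /andP[]. Qed.

Lemma Ci_nK2 (i : 'I_#|SS|) : ~~ is_K2_comp (CC i).
Proof. by have := enum_valP i; rewrite inE => /andP[]. Qed.

Lemma Ci_eq (i : 'I_#|SS|) (v : 'I_n) : v \in CC i -> CC i = Defs.comp e v.
Proof. exact: comps_in (Ci_comps i). Qed.

Lemma e_conn (v k : 'I_n) : e v k = connect e v k && (v != k).
Proof.
apply/idP/andP => [evk|[c vk]]; last exact: uc.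
split; first exact: connect1.
by apply: contraTneq evk => ->; rewrite eirr.
Qed.

Lemma AA_entry (v w : 'I_n) : (adjmx e *m adjmx e) v w =
  (#|[set k | e v k && e k w]|)%:R.
Proof.
rewrite mxE (_ : #|_| = #|[pred k | e v k && e k w]|); last first.
  by apply: eq_card => k; rewrite !inE.
rewrite -sum_bool_card; apply: eq_bigr => k _.
by rewrite !mxE -natrM mulnb.
Qed.

Lemma common_set (v w : 'I_n) : connect e v w ->
  [set k | e v k && e k w] = Defs.comp e v :\ v :\ w.
Proof.
move=> cvw; apply/setP => k; rewrite !inE e_conn (e_conn k w) (eq_sym v k).
have cwv : connect e w v by rewrite conn_sym.
case: (eqVneq k w) => [->|kw]; first by rewrite !andbF.
case: (eqVneq k v) => [->|kv]; first by rewrite !andbF.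
rewrite /= !andbT; apply/idP/idP => [/andP[]//|cvk]; rewrite cvk /=.
by rewrite conn_sym in cvk; exact: connect_trans cvk cvw.
Qed.

Lemma common_card (v w : 'I_n) : connect e v w ->
  (#|[set k | e v k && e k w]| + 1 + (v != w) = #|Defs.comp e v|)%N.
Proof.
move=> cvw; rewrite common_set // (cardsD1 v (Defs.comp e v)) (cardsD1 w (Defs.comp e v :\ v)).
rewrite !inE connect0 cvw andbT.
case: (eqVneq v w) => [<-|vw] /=.
  by rewrite addn0 add0n addnC.
by rewrite !addn1 !add1n.
Qed.


Lemma M_entry (v w : 'I_n) : (adjmx e *m adjmx e - 1%:M) v w =
  (connect e v w)%:R * ((#|Defs.comp e v|)%:R - 2).
Proof.
rewrite [LHS]mxE AA_entry !mxE.
case: (boolP (connect e v w)) => cvw.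
  have := common_card cvw; case: (eqVneq v w) => [<-|vw] /= <-.
    rewrite !natrD mul1r; ring.
  rewrite !natrD mul1r; ring.
have vw : v != w by apply: contraNneq cvw => ->; exact: connect0.
rewrite (negbTE vw) mul0r subr0 (_ : [set k | _] = set0) ?cards0 //.
apply/setP => k; rewrite !inE; apply/negP => /andP[evk ekw].
by case/negP: cvw; apply: connect_trans (connect1 evk) (connect1 ekw).
Qed.


Lemma diag_unit m (d : 'rV[algC]_m) : (forall i, d 0 i != 0) -> diag_mx d \in unitmx.
Proof.
by move=> h; rewrite unitmxE det_diag unitfE; apply/prodf_neq0 => i _.
Qed.

Lemma Ci_ne0 (i : 'I_#|SS|) : #|CC i| != 0%N.
Proof.
have /imsetP [x _ ->] := Ci_comps i.
by apply/eqP => /cards0_eq /setP /(_ x); rewrite !inE connect0.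
Qed.

Lemma Ci_disj (i j : 'I_#|SS|) v : v \in CC i -> v \in CC j -> i = j.
Proof.
move=> vi vj; apply: enum_val_inj.
by rewrite -[enum_val i]/(CC i) -[enum_val j]/(CC j) (Ci_eq vi) (Ci_eq vj).
Qed.

Lemma XXt : XX *m XX^T = diag_mx (\row_i ((#|CC i|)%:R : algC)).
Proof.
apply/matrixP => i j; rewrite !mxE.
case: (eqVneq i j) => [<-|ij].
  rewrite mulr1n (_ : #|CC i| = #|[pred v | v \in CC i]|) // -sum_bool_card.
  by apply: eq_bigr => v _; rewrite !mxE -natrM mulnb andbb.
rewrite mulr0n big1 // => v _; rewrite !mxE -natrM mulnb.
case: (boolP (v \in CC i)) => vi //; case: (boolP (v \in CC j)) => vj //.
by case/eqP: ij; exact: Ci_disj vi vj.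
Qed.

Lemma XX_free : row_free XX.
Proof.
rewrite /row_free eqn_leq rank_leq_row /=.
have h : \rank (XX *m XX^T) = #|SS|.
  by rewrite XXt mxrank_unit // diag_unit // => i; rewrite mxE pnatr_eq0 Ci_ne0.
by rewrite -[X in (X <= _)%N]h mxrankM_maxl.
Qed.


Lemma M_decomp : adjmx e *m adjmx e - 1%:M = XX^T *m diag_mx WW *m XX.
Proof.
apply/matrixP => v w; rewrite M_entry mxE.
under eq_bigr => i _ do rewrite mul_mx_diag !mxE.
case: (boolP (Defs.comp e v \in SS)) => hv.
  set i0 := enum_rank_in hv (Defs.comp e v).
  have ci0 : CC i0 = Defs.comp e v by rewrite /CC /i0 enum_rankK_in.
  rewrite (bigD1 i0) //= big1 ?addr0; last first.
    move=> i ii0; case: (boolP (v \in CC i)) => vi; last by rewrite !mul0r.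
    have vi0 : v \in CC i0 by rewrite ci0 inE connect0.
    by case/eqP: ii0; exact: Ci_disj vi vi0.
  rewrite ci0 !inE connect0 mul1r mulrC.
  done.
rewrite big1; last first.
  move=> i _; case: (boolP (v \in CC i)) => vi; last by rewrite !mul0r.
  by case/negP: hv; rewrite -(Ci_eq vi) /CC enum_valP.
have hc : Defs.comp e v \in comps e by apply: imset_f.
move: hv; rewrite inE hc /= negbK /is_K2_comp => /eqP ->.
by rewrite subrr mulr0.
Qed.

Lemma WW_unit : diag_mx WW \in unitmx.
Proof.
apply: diag_unit => i; rewrite mxE subr_eq0 eqr_nat.
exact: Ci_nK2.
Qed.

Lemma rank_M_uc : \rank (adjmx e *m adjmx e - 1%:M) = #|SS|.
Proof.
rewrite M_decomp mxrankMfree ?XX_free // -mxrank_tr trmx_mul tr_diag_mx trmxK.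
rewrite (eqmxMfull _ _); last by rewrite row_full_unit WW_unit.
exact/eqP/XX_free.
Qed.

End UC.

End G.

Lemma pm1_bounds (x : algC) : pm1 x -> -1 <= x /\ x <= 1.
Proof.
have h : (-1 : algC) <= 1 by rewrite (le_trans (lerN10 _)) ?ler01.
by case/orP => /eqP ->; split.
Qed.

Lemma sq1_pm1 (x : algC) : (x ^+ 2 - 1 != 0) = ~~ pm1 x.
Proof. by rewrite subr_eq0 sqrf_eq1. Qed.

Lemma count0_all (s : seq algC) : all pm1 s -> count (predC pm1) s = 0%N.
Proof. by elim: s => //= x s IH /andP[-> /IH ->]. Qed.

Lemma count_rank n (e : rel 'I_n) (esym : symmetric e) s :
  eigenvalues_of (adjmx e) s ->
  count (predC pm1) s = \rank (adjmx e *m adjmx e - 1%:M).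
Proof.
move=> hs; rewrite rankM // (permP (s_perm esym hs)) count_map count_enum_sum.
by apply: eq_bigr => k _; rewrite sq1_pm1.
Qed.

Lemma uc_of_vals n (e : rel 'I_n) (esym : symmetric e) (eirr : irreflexive e) :
  (forall k, -1 <= dd e 0 k) \/ (forall k, dd e 0 k <= 1) -> union_of_cliques e.
Proof. by move=> h; apply: clique_of_noP3; apply: noP3. Qed.

Theorem proposition2p2 (n : nat) (e : rel 'I_n)
  (esym : symmetric e) (eirr : irreflexive e)
  (s : seq algC) (hs : eigenvalues_of (adjmx e) s) :
  [/\ (all pm1 s -> perfect_matching_graph e),
      (count (predC pm1) s = 1%N ->
         union_of_cliques e /\
         exists2 C, C \in comps e &
           forall D, D \in comps e -> D != C -> is_K2_comp D)
    & (forall r t : algC,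
         perm_eq [seq x <- s | ~~ pm1 x] [:: r; t] -> t <= r ->
         (1 < r /\ t < -1) \/
         (union_of_cliques e /\
          #|[set C in comps e | ~~ is_K2_comp C]| = 2%N))].
Proof.
have hp := s_perm esym hs.
have inS k : dd e 0 k \in s by rewrite (perm_mem hp) map_f // mem_enum.
have realS x : x \in s -> x \is Num.real.
  by rewrite (perm_mem hp) => /mapP [k _ ->]; exact: dd_real.
have cnt := count_rank esym hs.
have nonpm k : ~~ pm1 (dd e 0 k) -> dd e 0 k \in [seq x <- s | ~~ pm1 x].
  by move=> h; rewrite mem_filter h inS.
have hN11 : (-1 : algC) <= 1 by rewrite (le_trans (lerN10 _)) ?ler01.
split.
- move=> alls x.
  have : \rank (adjmx e *m adjmx e - 1%:M) == 0%N by rewrite -cnt count0_all.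
  rewrite mxrank_eq0 subr_eq0 => /eqP /matrixP /(_ x x).
  rewrite AA_entry !mxE eqxx mulr1n => /eqP; rewrite (_ : 1 = 1%:R) // eqr_nat => /eqP <-.
  by apply: eq_card => y; rewrite !inE (esym y x) andbb.
- move=> c1.
  have : size [seq x <- s | ~~ pm1 x] = 1%N by rewrite size_filter.
  case el : [seq x <- s | ~~ pm1 x] => [|l [|]] // _.
  have ls : l \in s by have := mem_head l [::]; rewrite -el mem_filter => /andP[].
  have dl k : ~~ pm1 (dd e 0 k) -> dd e 0 k = l.
    by move=> /nonpm; rewrite el inE => /eqP.
  have uc : union_of_cliques e.
    apply: (uc_of_vals esym eirr); have [l1|l1] := boolP (l <= 1).
      right=> k; case: (boolP (pm1 (dd e 0 k))) => [/pm1_bounds[]//|/dl ->//].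
    left=> k; case: (boolP (pm1 (dd e 0 k))) => [/pm1_bounds[]//|/dl ->].
    have lr := realS l ls.
    rewrite -real_ltNge ?real1 ?lr // in l1.
    exact: le_trans hN11 (ltW l1).
  split=> //.
  have : #|SS e| = 1%N by rewrite -(rank_M_uc esym eirr uc) -cnt.
  move=> /eqP h1; have [C hC] := cards1P h1.
  have : C \in SS e by rewrite hC set11.
  rewrite inE => /andP[Cc _]; exists C => // D Dc DC.
  have : D \notin SS e by rewrite hC inE.
  by rewrite inE Dc /= negbK.
- move=> r t ph tr.
  have rin : r \in [seq x <- s | ~~ pm1 x] by rewrite (perm_mem ph) mem_head.
  have tin : t \in [seq x <- s | ~~ pm1 x] by rewrite (perm_mem ph) !inE eqxx orbT.
  have rr : r \is Num.real by move: rin; rewrite mem_filter => /andP[_ /realS].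
  have tr' : t \is Num.real by move: tin; rewrite mem_filter => /andP[_ /realS].
  have drt k : ~~ pm1 (dd e 0 k) -> (dd e 0 k = r) \/ (dd e 0 k = t).
    by move=> /nonpm; rewrite (perm_mem ph) !inE => /orP[/eqP|/eqP]; [left|right].
  have [r1|r1] := boolP (1 < r); have [t1|t1] := boolP (t < -1).
  + by left.
  + right; have uc : union_of_cliques e.
      apply: (uc_of_vals esym eirr); left => k.
      rewrite -real_leNgt ?realN ?real1 // in t1.
      case: (boolP (pm1 (dd e 0 k))) => [/pm1_bounds[]//|/drt [->|->]] //.
      exact: le_trans t1 tr.
    split=> //; rewrite -/(SS e) -(rank_M_uc esym eirr uc) -cnt -size_filter.
    by rewrite (perm_size ph).
  + right; have uc : union_of_cliques e.
      apply: (uc_of_vals esym eirr); right => k.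
      rewrite -real_leNgt ?real1 // in r1.
      case: (boolP (pm1 (dd e 0 k))) => [/pm1_bounds[]//|/drt [->|->]] //.
      exact: le_trans tr r1.
    split=> //; rewrite -/(SS e) -(rank_M_uc esym eirr uc) -cnt -size_filter.
    by rewrite (perm_size ph).
  + right; have uc : union_of_cliques e.
      apply: (uc_of_vals esym eirr); right => k.
      rewrite -real_leNgt ?real1 // in r1.
      case: (boolP (pm1 (dd e 0 k))) => [/pm1_bounds[]//|/drt [->|->]] //.
      exact: le_trans tr r1.
    split=> //; rewrite -/(SS e) -(rank_M_uc esym eirr uc) -cnt -size_filter.
    by rewrite (perm_size ph).
Qed.
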